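(* Let $X$ be a finite simplicial complex, $d\ge0$, and suppose $\ker(B_{d+1})=0$ (there are no nonzero $(d+1)$-cycles). Let $F:C_{d+1}(X)\to C_{d+1}(X)$ be a smooth vector field and $G^{\uparrow}=B_{d+1}FB_{d+1}^\intercal$. Then there is a bijection between the fixed points of the restriction $G^{\uparrow}|_{\operatorname{im}(B_{d+1})}:\operatorname{im}(B_{d+1})\to\operatorname{im}(B_{d+1})$ and those of $F$. If $F$ is moreover componentwise, then this bijection preserves stability, i.e. the numbers of positive, zero and negative eigenvalues of the corresponding linearized systems.
   Context: A finite simplicial complex $X$ on vertex set $\{1,\dots,n\}$ is a collection of nonempty subsets closed under taking nonempty subsets; $X_d$ is the set of simplices with $d+1$ vertices; a $d$-simplex with vertices $i_0<\dots<i_d$ is written $[i_0,\dots,i_d]$. $C_d(X)$ is the real vector space with basis $X_d$ and inner product making $X_d$ orthonormal. The boundary map is $\partial_d[i_0,\dots,i_d]=\sum_{k=0}^d(-1)^k[i_0,\dots,\widehat{i_k},\dots,i_d]$ with matrix $B_d$; $B_d^\intercal$ its transpose. A fixed point of a vector field is a zero of it. $F$ is componentwise if $(F(x))_s$ depends only on $x_s$ for each $s\in X_{d+1}$. *)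

(* Defs.v *)
From HB Require Import structures.
From mathcomp Require Import all_boot all_order all_algebra.
From mathcomp Require Import all_classical all_reals all_analysis.
Set Implicit Arguments. Unset Strict Implicit. Unset Printing Implicit Defensive.
Import Order.TTheory GRing.Theory Num.Theory.
Import numFieldNormedType.Exports.
Local Open Scope ring_scope.

(* A finite simplicial complex on the vertex set {0,...,n-1} (the paper's
   {1,...,n}, relabelled preserving the order): a set of nonempty subsets
   closed under taking nonempty subsets. *)
Definition simplicial_complex (n : nat) (X : {set {set 'I_n}}) : Prop :=
  (forall s, s \in X -> s != finset.set0) /\
  (forall s t : {set 'I_n}, s \in X -> t \subset s -> t != finset.set0 -> t \in X).

Definition simplices (n : nat) (X : {set {set 'I_n}}) (k : nat) : {set {set 'I_n}} :=
  [set s in X | #|s| == k.+1].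

(* C_k(X) is identified with row vectors 'rV[R]_#|X_k|; the basis element
   indexed by i : 'I_#|X_k| is the simplex enum_val i. *)

(* Matrix B_{d+1} of the boundary map C_{d+1} -> C_d: rows indexed by
   d-simplices tau, columns by (d+1)-simplices sigma; the entry is (-1)^k when
   tau is sigma with its k-th vertex (in increasing order, counted from 0)
   removed, i.e. k = number of vertices of sigma smaller than the removed one. *)
Definition bmx (R : pzRingType) (n : nat) (X : {set {set 'I_n}}) (d : nat) :
    'M[R]_(#|simplices X d|, #|simplices X d.+1|) :=
  \matrix_(i < #|simplices X d|, j < #|simplices X d.+1|)
    let tau : {set 'I_n} := enum_val i in let sigma : {set 'I_n} := enum_val j in
    if tau \subset sigma then
      \sum_(v in sigma :\: tau) (-1) ^+ #|[set u in sigma | (u < v)%N]|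
    else 0.

Fixpoint iterD (R : realType) (m : nat) (s : seq 'rV[R]_m)
    (F : 'rV[R]_m -> 'rV[R]_m) : 'rV[R]_m -> 'rV[R]_m :=
  match s with
  | [::] => F
  | v :: s' => fun x => 'D_v (iterD s' F) x
  end.

Definition smooth (R : realType) (m : nat) (F : 'rV[R]_m -> 'rV[R]_m) : Prop :=
  forall (s : seq 'rV[R]_m) (x : 'rV[R]_m), differentiable (iterD s F) x.

Definition componentwise (R : realType) (m : nat) (F : 'rV[R]_m -> 'rV[R]_m) : Prop :=
  forall (x x' : 'rV[R]_m) (s : 'I_m), x 0 s = x' 0 s -> F x 0 s = F x' 0 s.

Definition nroots (R : realType) (P : pred R) (p : {poly R}) (k : nat) : Prop :=
  (exists s : seq R, [/\ size s = k, all P s & (\prod_(r <- s) ('X - r%:P)) %| p])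
  /\ (forall s : seq R, all P s -> (\prod_(r <- s) ('X - r%:P)) %| p -> (size s <= k)%N).

Definition same_inertia (R : realType) (a b : nat) (A : 'M[R]_a) (B : 'M[R]_b) : Prop :=
  forall k : nat,
    (nroots (fun r => 0 < r) (char_poly A) k <-> nroots (fun r => 0 < r) (char_poly B) k) /\
    (nroots (fun r => r == 0) (char_poly A) k <-> nroots (fun r => r == 0) (char_poly B) k) /\
    (nroots (fun r => r < 0) (char_poly A) k <-> nroots (fun r => r < 0) (char_poly B) k).

(* Main.v *)
Require Import Defs.
From HB Require Import structures.
From mathcomp Require Import all_boot all_order all_algebra.
From mathcomp Require Import all_classical all_reals all_analysis.
From mathcomp Require Import complex ring lra zify.
Import Order.TTheory GRing.Theory Num.Theory.
Import numFieldNormedType.Exports.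
Local Open Scope ring_scope.

Set Implicit Arguments. Unset Strict Implicit. Unset Printing Implicit Defensive.
Section Aux.
Local Open Scope sesquilinear_scope.
Lemma inj_row_free (F : fieldType) m n (A : 'M[F]_(m,n)) :
  (forall v : 'rV_m, v *m A = 0 -> v = 0) -> row_free A.
Proof.
move=> H; rewrite -kermx_eq0; apply/eqP/row_matrixP => i; rewrite row0.
by apply: H; rewrite rowE -mulmxA mulmx_ker mulmx0.
Qed.

Section Sylv.
Variable C : numClosedFieldType.

Definition suppmx n (S : {set 'I_n}) : 'M[C]_(#|S|, n) :=
  \matrix_(k < #|S|, c < n) ((enum_val k == c)%:R).

Lemma suppmx_supp n (S : {set 'I_n}) (u : 'rV[C]_n) :
  (u <= suppmx S)%MS -> forall c, c \notin S -> u 0 c = 0.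
Proof.
move=> /submxP [w ->] c cS; rewrite mxE big1 // => l _; rewrite mxE.
case: eqP => [e|]; last by rewrite mulr0.
by move: cS; rewrite -e enum_valP.
Qed.

Lemma suppmx_free n (S : {set 'I_n}) : row_free (suppmx S).
Proof.
apply: inj_row_free => v /rowP H; apply/rowP => k; rewrite mxE.
have := H (enum_val k); rewrite !mxE (bigD1 k) //= mxE eqxx mulr1 big1 ?addr0 //.
move=> l lk; rewrite mxE (inj_eq enum_val_inj) (negbTE lk) mulr0 //.
Qed.

Lemma rank_suppmx n (S : {set 'I_n}) : \rank (suppmx S) = #|S|.
Proof. by apply/eqP; apply: suppmx_free. Qed.

Lemma formE n (x : 'rV[C]_n) (d : 'rV[C]_n) :
  (x *m diag_mx d *m x^t*) 0 0 = \sum_i d 0 i * (x 0 i * (x 0 i)^*).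
Proof.
rewrite mxE; apply: eq_bigr => i _; rewrite mul_mx_diag !mxE; ring.
Qed.

Lemma cap0 m1 m2 n (A : 'M[C]_(m1, n)) (B : 'M[C]_(m2, n)) :
  (forall v : 'rV_n, (v <= A)%MS -> (v <= B)%MS -> v = 0) -> \rank (A :&: B)%MS = 0%N.
Proof.
move=> H; apply/eqP; rewrite mxrank_eq0; apply/eqP/row_matrixP => i; rewrite row0.
apply: H; apply: submx_trans (row_sub _ _) _; [exact: capmxSl | exact: capmxSr].
Qed.

Lemma real_card3 n (d : 'rV[C]_n) : d \is a realmx ->
  addn (addn #|[set i | 0 < d 0 i]| #|[set i | d 0 i < 0]|) #|[set i | d 0 i == 0]| = n.
Proof.
move=> /mxOverP dr.
have -> : [set i : 'I_n | d 0 i == 0] = ~: ([set i | 0 < d 0 i] :|: [set i | d 0 i < 0]).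
  apply/setP => i /=; rewrite !inE negb_or.
  have := dr ord0 i; rewrite [ord0]ord1 => dri.
  by case: (real_ltgtP (real0 _) dri).
have := cardsC ([set i | 0 < d 0 i] :|: [set i | d 0 i < 0]).
rewrite cardsU card_ord => E; rewrite -[in RHS]E.
have -> : [set i : 'I_n | 0 < d 0 i] :&: [set i | d 0 i < 0] = finset.set0.
  apply/setP => i; rewrite !inE; apply/negP => /andP[a b].
  by have := lt_trans a b; rewrite ltxx.
by rewrite cards0 subn0.
Qed.


Lemma ctmxM m n p (A : 'M[C]_(m, n)) (B : 'M[C]_(n, p)) : (A *m B)^t* = B^t* *m A^t*.
Proof. by rewrite trmx_mul map_mxM. Qed.

Lemma sylv_le n (P : 'M[C]_n) (d e : 'rV[C]_n) : P \in unitmx ->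
  d \is a realmx -> e \is a realmx ->
  P *m diag_mx d *m P^t* = diag_mx e ->
  leq #|[set i | 0 < e 0 i]| #|[set i | 0 < d 0 i]|.
Proof.
move=> Pu /mxOverP dr /mxOverP er He.
set Se := [set i | 0 < e 0 i]; set Sd := [set i | 0 < d 0 i].
set Nd := [set i : 'I_n | d 0 i <= 0].
have NdE : Nd = ~: Sd.
  apply/setP => i; rewrite !inE.
  by rewrite real_leNgt // [ord0]ord1; apply: dr.
have cNd : #|Nd| = (n - #|Sd|)%N by rewrite NdE cardsCs finset.setCK card_ord.
pose U := suppmx Se *m P; pose W := suppmx Nd.
have rU : \rank U = #|Se| by rewrite mxrankMfree ?row_free_unit // rank_suppmx.
have cap : \rank (U :&: W)%MS = 0%N.
  apply: cap0 => v /submxP [a ->] vW.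
  have wS : (a *m suppmx Se <= suppmx Se)%MS by apply: submxMl.
  set w := a *m suppmx Se in wS *.
  have vE : a *m U = w *m P by rewrite mulmxA.
  rewrite vE in vW *.
  have Ef : (w *m P *m diag_mx d *m (w *m P)^t*) 0 0 = (w *m diag_mx e *m w^t*) 0 0.
    by rewrite ctmxM -He !mulmxA.
  rewrite !formE in Ef.
  have ge : forall i, true -> 0 <= e 0 i * (w 0 i * (w 0 i)^* ).
    move=> i _; case: (boolP (i \in Se)) => iS.
      by rewrite mulr_ge0 ?mul_conjC_ge0 // ltW //; move: iS; rewrite inE.
    by rewrite (suppmx_supp wS iS) mul0r mulr0.
  have le : \sum_i d 0 i * ((w *m P) 0 i * ((w *m P) 0 i)^* ) <= 0.
    apply: sumr_le0 => i _; case: (boolP (i \in Nd)) => iN.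
      by rewrite mulr_le0_ge0 ?mul_conjC_ge0 //; move: iN; rewrite inE.
    by rewrite (suppmx_supp vW iN) mul0r mulr0.
  have z : \sum_i e 0 i * (w 0 i * (w 0 i)^* ) = 0.
    by apply/le_anti/andP; split; [rewrite -Ef | apply: sumr_ge0].
  have w0 : w = 0.
    apply/rowP => i; rewrite [in RHS]mxE; case: (boolP (i \in Se)) => iS; last first.
      by have := suppmx_supp wS iS => ->.
    have /eqP : e 0 i * (w 0 i * (w 0 i)^* ) = 0 by apply: (psumr_eq0P ge z).
    rewrite mulf_eq0.
    case/orP => [/eqP e0|]; last by rewrite mul_conjC_eq0 => /eqP.
    by move: iS; rewrite inE e0 ltxx.
  by rewrite w0 mul0mx.
have := mxrank_sum_cap U W; rewrite cap addn0 rU rank_suppmx => E.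
have := rank_leq_col (U + W)%MS; rewrite E cNd.
have : leq #|Sd| n by rewrite -[n in leq _ n]card_ord max_card.
lia.
Qed.

Lemma diag_mxN' n (d : 'rV[C]_n) : diag_mx (- d) = - diag_mx d.
Proof. by apply/matrixP => i j; rewrite !mxE; case: (i == j); rewrite ?mulr1n ?mulr0n ?oppr0. Qed.

Lemma realmxN m n (d : 'M[C]_(m, n)) : d \is a realmx -> - d \is a realmx.
Proof. by move=> /mxOverP dr; apply/mxOverP => i j; rewrite mxE realN. Qed.

Lemma sylv n (P : 'M[C]_n) (d e : 'rV[C]_n) : P \in unitmx ->
  d \is a realmx -> e \is a realmx ->
  P *m diag_mx d *m P^t* = diag_mx e ->
  [/\ #|[set i | 0 < e 0 i]| = #|[set i | 0 < d 0 i]|,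
      #|[set i | e 0 i < 0]| = #|[set i | d 0 i < 0]| &
      #|[set i | e 0 i == 0]| = #|[set i | d 0 i == 0]|].
Proof.
move=> Pu dr er He.
have He' : invmx P *m diag_mx e *m (invmx P)^t* = diag_mx d.
  rewrite -He -!mulmxA mulKmx // !mulmxA -mulmxA -ctmxM mulVmx //.
  by rewrite trmx1 map_mx1 mulmx1.
have Pu' : invmx P \in unitmx by rewrite unitmx_inv.
have pos : #|[set i | 0 < e 0 i]| = #|[set i | 0 < d 0 i]|.
  by apply/eqP; rewrite eqn_leq (sylv_le Pu dr er He) (sylv_le Pu' er dr He').
have negE : forall f : 'rV[C]_n, [set i | f 0 i < 0] = [set i | 0 < (- f) 0 i].
  by move=> f; apply/setP => i; rewrite !inE mxE oppr_gt0.
have neg : #|[set i | e 0 i < 0]| = #|[set i | d 0 i < 0]|.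
  rewrite !negE; apply/eqP; rewrite eqn_leq.
  rewrite (sylv_le Pu (realmxN dr) (realmxN er)) ?(sylv_le Pu' (realmxN er) (realmxN dr)) //.
    by rewrite !diag_mxN' mulmxN mulNmx He'.
  by rewrite !diag_mxN' mulmxN mulNmx He.
split => //.
have := real_card3 er; have := real_card3 dr; rewrite pos neg; lia.
Qed.
End Sylv.

Lemma char_poly_conj (R : comUnitRingType) n (P A : 'M[R]_n) : P \in unitmx ->
  char_poly (invmx P *m A *m P) = char_poly A.
Proof.
move=> Pu; rewrite /char_poly /char_poly_mx.
set Pi := map_mx polyC (invmx P); set P' := map_mx polyC P.
have PiP : Pi *m P' = 1%:M by rewrite -map_mxM mulVmx // map_mx1.
have -> : 'X%:M - map_mx polyC (invmx P *m A *m P) =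
          Pi *m ('X%:M - map_mx polyC A) *m P'.
  rewrite mulmxBr mulmxBl !map_mxM -/Pi -/P'; congr (_ - _).
  by rewrite scalar_mxC -mulmxA PiP mulmx1.
by rewrite !det_mulmx mulrAC -det_mulmx PiP det1 mul1r.
Qed.

Lemma char_poly_conjV (R : comUnitRingType) n (P A : 'M[R]_n) : P \in unitmx ->
  char_poly (P *m A *m invmx P) = char_poly A.
Proof. by move=> Pu; rewrite -{1}(invmxK P) char_poly_conj ?unitmx_inv. Qed.

Section Core.
Variable C : numClosedFieldType.

Lemma entry_form m n (X Y : 'M[C]_(m, n)) (K : 'M[C]_n) i j :
  (X *m K *m Y^t*) i j = (row i X *m K *m (row j Y)^t*) 0 0.
Proof.
rewrite !mxE; apply: eq_bigr => l _; rewrite !mxE; congr (_ * _).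
by apply: eq_bigr => k _; rewrite !mxE.
Qed.

Lemma pos_form n (x : 'rV[C]_n) : x != 0 -> 0 < (x *m x^t*) 0 0.
Proof.
move=> x0.
have ge : forall i : 'I_n, true -> 0 <= x 0 i * (x 0 i)^* by move=> i _; apply: mul_conjC_ge0.
have -> : (x *m x^t*) 0 0 = \sum_i x 0 i * (x 0 i)^*.
  by rewrite mxE; apply: eq_bigr => i _; rewrite !mxE.
rewrite lt_def sumr_ge0 // andbT; apply: contra x0 => /eqP z.
apply/eqP/rowP => i; rewrite [in RHS]mxE; apply/eqP; rewrite -mul_conjC_eq0; apply/eqP.
exact: (psumr_eq0P ge z).
Qed.

Lemma ct_diag n (d : 'rV[C]_n) : d \is a realmx -> (diag_mx d)^t* = diag_mx d.
Proof.
move=> /mxOverP dr; apply/matrixP => i j; rewrite !mxE rmorphMn eq_sym.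
case: eqP => [->|_]; rewrite ?mulr1n ?mulr0n //.
by apply: conj_Creal; apply: dr.
Qed.

Lemma core n m (Bc : 'M[C]_(n, m)) (d : 'rV[C]_n) : row_free Bc -> d \is a realmx ->
  exists2 mu : 'rV[C]_n, mu \is a realmx &
   [/\ char_poly (Bc *m Bc^t* *m diag_mx d) = \prod_i ('X - (mu 0 i)%:P),
       #|[set i | 0 < mu 0 i]| = #|[set i | 0 < d 0 i]|,
       #|[set i | mu 0 i < 0]| = #|[set i | d 0 i < 0]| &
       #|[set i | mu 0 i == 0]| = #|[set i | d 0 i == 0]|].
Proof.
move=> Bf dr.
set K := Bc *m Bc^t*.
have Kct : K^t* = K by rewrite /K ctmxM trmxCK.
have Kn : K \is normalmx by apply/normalmxP; rewrite Kct.
set U := spectralmx K; set ka := spectral_diag K.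
have KE : K = invmx U *m diag_mx ka *m U by apply/orthomx_spectralP.
have Uu : U \is unitarymx := spectral_unitarymx K.
have Uunit : U \in unitmx := spectral_unit K.
have UU : U *m U^t* = 1%:M by apply/unitarymxP.
have Ui : invmx U = U^t* by apply: invmx_unitary.
have kaE : U *m K *m U^t* = diag_mx ka.
  by rewrite KE Ui !mulmxA UU mul1mx -mulmxA UU mulmx1.
have kapos : forall i, 0 < ka 0 i.
  move=> i; have := kaE => /matrixP /(_ i i); rewrite [diag_mx _ _ _]mxE eqxx mulr1n => <-.
  rewrite entry_form.
  have -> : row i U *m K *m (row i U)^t* = (row i U *m Bc) *m (row i U *m Bc)^t*.
    by rewrite ctmxM /K !mulmxA.
  apply: pos_form; rewrite mulmx_free_eq0 // rowE mulmx_free_eq0 ?row_free_unit //.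
  by apply/eqP => /matrixP /(_ 0 i); rewrite !mxE !eqxx /= => /eqP; rewrite oner_eq0.
set s := \row_i sqrtC (ka 0 i).
have sr : s \is a realmx.
  by apply/mxOverP => i j; rewrite mxE ger0_real // sqrtC_ge0 ltW.
have s0 : forall i, s 0 i != 0 by move=> i; rewrite mxE sqrtC_eq0 gt_eqF.
set Z := diag_mx s *m U.
have Zu : Z \in unitmx.
  rewrite unitmx_mul Uunit andbT unitmxE det_diag unitfE.
  by apply/prodf_neq0 => i _.
have dd : diag_mx s *m diag_mx s = diag_mx ka.
  apply/matrixP => i j; rewrite mul_diag_mx !mxE.
  case: eqP => [->|_]; rewrite ?mulr1n ?mulr0n ?mulr0 //.
  by rewrite -expr2 sqrtCK.
have ZZ : Z^t* *m Z = K.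
  by rewrite /Z ctmxM ct_diag // -Ui KE -dd !mulmxA.
set H := Z *m diag_mx d *m Z^t*.
have Hh : H \is hermsymmx.
  apply/is_hermitianmxP; rewrite (_ : (-1) ^+ false = 1 :> C) // scale1r.
  by rewrite /H /Z !ctmxM !trmxCK !ct_diag // !mulmxA.
set V := spectralmx H; set mu := spectral_diag H.
have HE : H = invmx V *m diag_mx mu *m V.
  by apply/orthomx_spectralP/hermitian_normalmx.
have mur : mu \is a realmx := hermitian_spectral_diag_real Hh.
have Vunit : V \in unitmx := spectral_unit H.
have VV : V *m V^t* = 1%:M by apply/unitarymxP/spectral_unitarymx.
have Zt_u : Z^t* \in unitmx by rewrite map_unitmx unitmx_tr.
exists mu => //.
have [e1 e2 e3] : [/\ #|[set i | 0 < mu 0 i]| = #|[set i | 0 < d 0 i]|,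
      #|[set i | mu 0 i < 0]| = #|[set i | d 0 i < 0]| &
      #|[set i | mu 0 i == 0]| = #|[set i | d 0 i == 0]|].
  apply: (sylv (P := V *m Z)) => //; first by rewrite unitmx_mul Vunit.
  have <- : V *m H *m V^t* = diag_mx mu.
    by rewrite HE !mulmxA mulmxV // mul1mx -mulmxA VV mulmx1.
  by rewrite /H ctmxM !mulmxA.
split => //.
have : Z^t* *m H *m invmx (Z^t*) = K *m diag_mx d.
  by rewrite /H !mulmxA -[Z^t* *m diag_mx s *m U]mulmxA ZZ mulmxK.
rewrite HE => <-.
rewrite char_poly_conjV // char_poly_conj //.
rewrite char_poly_trig ?diag_mx_is_trig //.
by apply: eq_bigr => i _; rewrite mxE eqxx mulr1n.
Qed.
End Core.

Section Transfer.
Variable R : rcfType.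
Local Notation f := (real_complex R).

Lemma cnt_transfer n (a : 'rV[R]_n) (c : 'rV[R[i]]_n) :
  (forall i, c 0 i = (a 0 i)%:C%C) ->
  [/\ #|[set i | 0 < c 0 i]| = #|[set i | 0 < a 0 i]|,
      #|[set i | c 0 i < 0]| = #|[set i | a 0 i < 0]| &
      #|[set i | c 0 i == 0]| = #|[set i | a 0 i == 0]|].
Proof.
move=> E; split; apply: eq_card => i; rewrite !inE E.
- by rewrite -(rmorph0 f) ltcR.
- by rewrite -(rmorph0 f) ltcR.
- by rewrite -(rmorph0 f) (inj_eq (@complexI R)).
Qed.

Lemma core_real p q (B : 'M[R]_(p, q)) (j : 'rV[R]_q) : row_free B^T ->
  exists mu : 'rV[R]_q,
   [/\ char_poly (B^T *m B *m diag_mx j) = \prod_i ('X - (mu 0 i)%:P),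
       #|[set i | 0 < mu 0 i]| = #|[set i | 0 < j 0 i]|,
       #|[set i | mu 0 i < 0]| = #|[set i | j 0 i < 0]| &
       #|[set i | mu 0 i == 0]| = #|[set i | j 0 i == 0]|].
Proof.
move=> Bf.
set Bc : 'M[R[i]]_(q, p) := map_mx f B^T.
have Bcf : row_free Bc by rewrite /row_free mxrank_map.
have fr : forall x : R, f x \is Num.real by move=> x; apply/complex_realP; exists x.
have Bct : Bc^t* = map_mx f B.
  by apply/matrixP => a b; rewrite !mxE; apply: conj_Creal.
set d : 'rV[R[i]]_q := map_mx f j.
have dr : d \is a realmx by apply/mxOverP => a b; rewrite mxE.
have [muc mucr [cpE c1 c2 c3]] := core Bcf dr.
pose mu := \row_i complex.Re (muc 0 i).
have muE : forall i, muc 0 i = (mu 0 i)%:C%C.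
  by move=> i; rewrite mxE RRe_real //; move/mxOverP: mucr; apply.
have dE : forall i, d 0 i = (j 0 i)%:C%C by move=> i; rewrite mxE.
have [m1 m2 m3] := cnt_transfer muE.
have [d1 d2 d3] := cnt_transfer dE.
exists mu; split; [| by rewrite -m1 c1 d1 | by rewrite -m2 c2 d2 | by rewrite -m3 c3 d3].
apply: (@map_poly_inj _ _ f).
rewrite map_char_poly !map_mxM map_diag_mx -Bct cpE map_prod_XsubC.
by apply: eq_bigr => i _; rewrite muE.
Qed.
End Transfer.
Lemma cnt_count n (Q : pred 'I_n) : count Q (enum 'I_n) = #|[set i | Q i]|.
Proof. by rewrite cardsE cardE enumT /enum_mem size_filter; apply: eq_count. Qed.

Section NR.
Variable R : realType.
Variable P : pred R.

Lemma max_le (s t : seq R) : all P s ->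
  (\prod_(r <- s) ('X - r%:P)) %| \prod_(r <- t) ('X - r%:P) -> (size s <= count P t)%N.
Proof.
elim: s t => [//|r s IH] t /= /andP [Pr As].
rewrite big_cons => dv.
have rt : r \in t.
  have : root (\prod_(r0 <- t) ('X - r0%:P)) r.
    by apply: (root_dvdp dv); rewrite rootM root_XsubC eqxx.
  by rewrite root_prod_XsubC.
have pt := perm_to_rem rt.
rewrite (perm_big _ pt) big_cons dvdp_mul2l ?polyXsubC_eq0 // in dv.
by rewrite (permP pt) /= Pr add1n ltnS IH.
Qed.

Lemma nroots_prod n (a : 'I_n -> R) k :
  nroots P (\prod_i ('X - (a i)%:P)) k <-> k = #|[set i | P (a i)]|.
Proof.
have pE : \prod_i ('X - (a i)%:P) = \prod_(r <- map a (enum 'I_n)) ('X - r%:P).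
  by rewrite big_map big_enum.
have cE : count P (map a (enum 'I_n)) = #|[set i | P (a i)]|.
  by rewrite count_map cnt_count.
have ex : nroots P (\prod_i ('X - (a i)%:P)) #|[set i | P (a i)]|.
  split.
    exists (seq.filter P (map a (enum 'I_n))); split.
    - by rewrite size_filter.
    - by apply/allP => x; rewrite mem_filter => /andP [].
    - by rewrite pE [X in _ %| X](bigID P) /= big_filter; apply: dvdp_mulr.
  by move=> s As; rewrite pE -cE; apply: max_le.
split; last by move=> ->.
move=> [[s [ss As dv]] Hm]; case: ex => [[s' [ss' As' dv']] Hm'].
have := Hm' s As dv; have := Hm s' As' dv'; rewrite ss ss'.
by move=> l1 l2; apply/eqP; rewrite eqn_leq l1 l2.
Qed.
End NR.
Section An.
Variable R : realType.

Lemma mulmxr_diff m n (A : 'M[R]_(m, n)) (x : 'rV[R]_m) :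
  differentiable (fun y : 'rV[R]_m => y *m A) x.
Proof.
have -> : (fun y : 'rV[R]_m => y *m A) = \sum_(i < m) (fun y : 'rV[R]_m => y 0 i *: row i A).
  by apply/funext => y; rewrite fct_sumE mulmx_sum_row.
apply: differentiable_sum => i; apply: differentiableZl; exact: differentiable_coord.
Qed.

Lemma mulmxr_d m n (A : 'M[R]_(m, n)) (x : 'rV[R]_m) :
  'd (fun y : 'rV[R]_m => y *m A) x = (fun v => v *m A) :> (_ -> _).
Proof.
have -> : (fun y : 'rV[R]_m => y *m A) = mulmxr A by [].
apply: diff_lin => y; apply: differentiable_continuous; exact: mulmxr_diff.
Qed.


Lemma mulmxr_dv m n (A : 'M[R]_(m, n)) (x v : 'rV[R]_m) :
  'd (fun y : 'rV[R]_m => y *m A) x v = v *m A.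
Proof. by rewrite mulmxr_d. Qed.

Lemma row_lin1 m n (g : 'rV[R]_m -> 'rV[R]_n) i : row i (lin1_mx g) = g (delta_mx 0 i).
Proof. by apply/rowP => j; rewrite !mxE. Qed.

Lemma jacG p q (B : 'M[R]_(p, q)) (F : 'rV[R]_q -> 'rV[R]_q) (x : 'rV[R]_p) :
  differentiable F (x *m B) ->
  'J (fun y => F (y *m B) *m B^T) x = B *m 'J F (x *m B) *m B^T.
Proof.
move=> dF.
have -> : (fun y => F (y *m B) *m B^T) =
    (fun y => y *m B^T) \o (F \o (fun y => y *m B)) by [].
rewrite /jacobian diff_comp ?differentiable_comp ?mulmxr_diff //.
apply/row_matrixP => i; rewrite row_lin1 /= mulmxr_dv diff_comp ?mulmxr_diff //=.
rewrite mulmxr_dv !rowE !mulmxA -rowE mul_rV_lin1.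
  by rewrite rowE.
all: try exact: mulmxr_diff.
apply: differentiable_comp => //; exact: mulmxr_diff.
Qed.

Lemma comp_diag m (F : 'rV[R]_m -> 'rV[R]_m) (p : 'rV[R]_m) :
  componentwise F -> differentiable F p ->
  forall i j, i != j -> 'J F p i j = 0.
Proof.
move=> cF dF i j ij.
have @c : {linear 'rV[R]_m -> R}.
  by exists (fun N : 'rV[R]_m => N 0 j); do 2![eexists]; do ?[constructor];
     rewrite ?mxE// => ? *; rewrite ?mxE//; move=> ?; rewrite !mxE.
have cE : forall N, c N = N 0 j by [].
have dc : forall z, 'd c z = c :> (_ -> _).
  move=> z; apply: diff_lin; exact: coord_continuous.
have dcz : forall z, differentiable c z.
  move=> z; exact: differentiable_coord.
have dg : differentiable (c \o F) p by apply: differentiable_comp.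
have : 'D_(delta_mx 0 i) (c \o F) p = 0.
  rewrite /derive.
  have -> : (fun h : R => h^-1 *: ((c \o F \o shift p) (h *: delta_mx 0 i) - (c \o F) p)) = fun=> 0.
    apply/funext => h /=; rewrite (cF _ p) ?subrr ?scaler0 //.
    by rewrite !mxE eq_sym (negbTE ij) andbF mulr0 add0r.
  exact: lim_cst.
rewrite deriveE // diff_comp // dc /= => <-.
by rewrite /jacobian mxE.
Qed.
End An.

End Aux.

Lemma sqsum0 (R : realFieldType) n (w : 'rV[R]_n) : w *m w^T = 0 -> w = 0.
Proof.
move=> /matrixP /(_ 0 0); rewrite !mxE => z.
have ge : forall i : 'I_n, true -> 0 <= w 0 i * w^T i 0.
  by move=> i _; rewrite mxE -expr2 sqr_ge0.
apply/rowP => i; rewrite [in RHS]mxE.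
have /eqP : w 0 i * w^T i 0 = 0 by apply: (psumr_eq0P ge z).
by rewrite mxE mulf_eq0 orbb => /eqP.
Qed.

Unset Implicit Arguments.

Theorem mainTheorem11 (R : realType) (n : nat) (X : {set {set 'I_n}}) (d : nat)
    (F : 'rV[R]_(#|simplices X d.+1|) -> 'rV[R]_(#|simplices X d.+1|)) :
  simplicial_complex X ->
  (forall c : 'rV[R]_(#|simplices X d.+1|), c *m (bmx R X d)^T = 0 -> c = 0) ->
  smooth F ->
  let B := bmx R X d in
  let G := fun x : 'rV[R]_(#|simplices X d|) => F (x *m B) *m B^T in
  exists phi : 'rV[R]_(#|simplices X d|) -> 'rV[R]_(#|simplices X d.+1|),
    [/\ (forall x, (x <= B^T)%MS -> G x = 0 -> F (phi x) = 0),
        (forall x x', (x <= B^T)%MS -> G x = 0 -> (x' <= B^T)%MS -> G x' = 0 ->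
            phi x = phi x' -> x = x'),
        (forall y, F y = 0 -> exists x, [/\ (x <= B^T)%MS, G x = 0 & phi x = y])
      & (componentwise F ->
         forall x, (x <= B^T)%MS -> G x = 0 ->
         forall (r : nat) (Q : 'M[R]_(r, #|simplices X d|)) (M : 'M[R]_r),
           row_free Q -> (Q == B^T)%MS -> Q *m 'J G x = M *m Q ->
           same_inertia M ('J F (phi x)))].
Proof.
move=> _ Hinj sm B G.
have BTf : row_free B^T by apply: inj_row_free.
have sq0 : forall w : 'rV_#|simplices X d|, w *m B = 0 -> (w <= B^T)%MS -> w = 0.
  move=> w wB /submxP [c wE]; apply: sqsum0.
  by rewrite {2}wE trmx_mul trmxK mulmxA wB mul0mx.
have Ku : B^T *m B \in unitmx.
  rewrite -row_free_unit; apply: inj_row_free => v vK.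
  apply: Hinj; apply: sq0; first by rewrite -mulmxA.
  exact: submxMl.
exists (fun x => x *m B); split.
- by move=> x _ Gx; apply: Hinj; exact: Gx.
- move=> x x' /submxP [c ->] _ /submxP [c' ->] _ e.
  apply/eqP; rewrite -subr_eq0; apply/eqP; rewrite -mulmxBl; apply: sq0.
    by rewrite !mulmxBl e subrr.
  exact: submxMl.
- move=> y Fy; exists (y *m invmx (B^T *m B) *m B^T).
  have e : y *m invmx (B^T *m B) *m B^T *m B = y by rewrite -mulmxA mulmxKV.
  split; [exact: submxMl | by rewrite /G e Fy mul0mx | exact: e].
move=> cF x xB Gx r Q M Qf QB QJ.
have dF : differentiable F (x *m B) by exact: (sm [::] (x *m B)).
rewrite /G jacG // in QJ.
set J := 'J F (x *m B) in QJ *.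
set jr := \row_i J i i.
have Jd : J = diag_mx jr.
  apply/matrixP => i j; rewrite [RHS]mxE [jr 0 i]mxE.
  case: eqP => [->|/eqP ij]; first by rewrite mulr1n.
  by rewrite mulr0n (comp_diag cF dF).
move/andP: QB => [/submxP [A QA] /submxP [A' BA]].
have AA' : A *m A' = 1%:M.
  apply/eqP; rewrite -subr_eq0 -(mulmx_free_eq0 _ Qf) mulmxBl mul1mx.
  by rewrite -mulmxA -BA -QA subrr.
have A'A : A' *m A = 1%:M.
  apply/eqP; rewrite -subr_eq0 -(mulmx_free_eq0 _ BTf) mulmxBl mul1mx.
  by rewrite -mulmxA -QA -BA subrr.
have rq : r = #|simplices X d.+1|.
  apply/eqP; rewrite eqn_leq.
  have := mxrankM_maxl A A'; rewrite AA' mxrank1 => h1.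
  have := mxrankM_maxl A' A; rewrite A'A mxrank1 => h2.
  by rewrite (leq_trans h1 (rank_leq_col A)) (leq_trans h2 (rank_leq_col A')).
subst r.
have [Au _] := mulmx1_unit AA'.
have A'E : A' = invmx A.
  by rewrite -[A']mul1mx -(mulVmx Au) -mulmxA AA' mulmx1.
have ME : M = A *m (B^T *m B *m diag_mx jr) *m invmx A.
  have : (A *m (B^T *m B *m diag_mx jr) - M *m A) *m B^T = 0.
    have e1 : M *m A *m B^T = M *m Q by rewrite QA mulmxA.
    have e2 : A *m (B^T *m B *m J) *m B^T = Q *m (B *m J *m B^T) by rewrite QA !mulmxA.
    by rewrite mulmxBl -Jd e1 e2 QJ subrr.
  move/eqP; rewrite mulmx_free_eq0 // subr_eq0 => /eqP ->.
  by rewrite mulmxK.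
have [mu [cpE c1 c2 c3]] := core_real jr BTf.
have cM : char_poly M = \prod_i ('X - (mu 0 i)%:P) by rewrite ME char_poly_conjV.
have cJ : char_poly J = \prod_i ('X - (jr 0 i)%:P).
  rewrite Jd char_poly_trig ?diag_mx_is_trig //.
  by apply: eq_bigr => i _; rewrite [diag_mx _ _ _]mxE eqxx mulr1n.
move=> k; rewrite cM cJ.
split; [|split]; split => /nroots_prod ->; apply/nroots_prod.
- exact: c1.
- exact: (esym c1).
- exact: c3.
- exact: (esym c3).
- exact: c2.
- exact: (esym c2).
Qed.
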